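(* Let $m\ge2$, let $k_1,\dots,k_{m-1}\ge0$ be integers and let $j$ be an integer with $1\le j\le m/2$. Then $\big|e^{(m),j+1}_{k_1,\dots,k_{m-1}}\big|\le\big|e^{(m),j}_{k_1,\dots,k_{m-1}}\big|$. Moreover, if $k_{m-j}\ge1$, then $\big|e^{(m),j+1}_{k_1,\dots,k_{m-1}}\big|\le\frac{j}{m-j}\big|e^{(m),j}_{k_1,\dots,k_{m-1}}\big|$.
   Context: For $1\le j\le m$ and integers $k_1,\dots,k_{m-1}\ge0$, $e^{(m),j}_{k_1,\dots,k_{m-1}}=\prod_{1\le i\le m,\,i\ne j}(i-j)^{k_{(i-j)\bmod m}}$, where $(i-j)\bmod m$ denotes the representative in $\{1,\dots,m-1\}$. *)

(* Defs.v *)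
From HB Require Import structures.
From mathcomp Require Import all_boot all_order all_algebra.
Set Implicit Arguments. Unset Strict Implicit. Unset Printing Implicit Defensive.
Import Order.TTheory GRing.Theory Num.Theory.
Local Open Scope ring_scope.

Definition resid (m i j : nat) : nat := absz ((i%:Z - j%:Z) %% m%:Z)%Z.

(* e^{(m),j}_{k_1,...,k_{m-1}} = prod_{1<=i<=m, i<>j} (i-j)^{k_{(i-j) mod m}},
   with the exponent sequence given as k : nat -> nat (only k 1 .. k (m-1) are used). *)
Definition e (m j : nat) (k : nat -> nat) : int :=
  \prod_(1 <= i < m.+1 | i != j) (i%:Z - j%:Z) ^+ k (resid m i j).

(* Main.v *)
Require Import Defs.
From HB Require Import structures.
From mathcomp Require Import all_boot all_order all_algebra.
From mathcomp Require Import ring lra zify.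
Import Order.TTheory GRing.Theory Num.Theory.
Local Open Scope ring_scope.

Lemma decomp (m : nat) (k : nat -> nat) (j : nat) :
  (1 <= j)%N -> (j < m)%N ->
  let P := \prod_(1 <= i < m) (if i != j then (i%:Z - j%:Z) ^+ k (resid m i j) else 1) in
  e m j k = (m%:Z - j%:Z) ^+ k (m - j)%N * P /\
  e m j.+1 k = (- j%:Z) ^+ k (m - j)%N * P.
Proof.
move=> j1 jm P; split.
  rewrite /e big_mkcond big_nat_recr /=; last by lia.
  have -> : (m != j) = true by apply/eqP; lia.
  rewrite mulrC /P.
  have -> : resid m m j = (m - j)%N; last by [].
  rewrite /resid modz_small; last by apply/andP; split; lia.
  lia.
rewrite /e big_mkcond big_ltn; last by lia.
rewrite big_add1 /=.
have -> : (1 != j.+1) = true by apply/eqP; lia.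
congr (_ * _).
  have -> : resid m 1 j.+1 = (m - j)%N; last by have -> : (1%:Z - j.+1%:Z) = - j%:Z by lia.
  rewrite /resid.
  have -> : (1%:Z - j.+1%:Z) = (-1) * m%:Z + (m%:Z - j%:Z) by lia.
  rewrite modzMDl modz_small; last by apply/andP; split; lia.
  lia.
apply: eq_bigr => i _.
rewrite eqSS.
have -> : (i.+1%:Z - j.+1%:Z) = (i%:Z - j%:Z) by lia.
by rewrite /resid; have -> : (i.+1%:Z - j.+1%:Z) = (i%:Z - j%:Z) by lia.
Qed.

Theorem mainTheorem14 (m : nat) (k : nat -> nat) (j : nat) :
  (2 <= m)%N -> (1 <= j)%N -> (2 * j <= m)%N ->
  `|e m j.+1 k| <= `|e m j k| /\
  ((1 <= k (m - j))%N ->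
    `|(e m j.+1 k)%:~R : rat| <= (j%:R / (m - j)%:R) * `|(e m j k)%:~R : rat|).
Proof.
move=> m2 j1 jm.
have jm' : (j < m)%N by lia.
have [E1 E2] := @decomp m k j j1 jm'.
set n := k (m - j)%N in E1 E2 *.
have Hmj : (m%:Z - j%:Z) = (m - j)%N%:Z by lia.
rewrite Hmj in E1.
rewrite E1 E2; split.
  rewrite !normrM !normrX normrN.
  apply: ler_wpM2r; first exact: normr_ge0.
  apply: lerXn2r; rewrite ?qualifE //=; lia.
move=> n1.
rewrite !rmorphM !rmorphXn /= rmorphN !normrM !normrX normrN mulrA.
apply: ler_wpM2r; first exact: normr_ge0.
have Hmj0 : ((m - j)%N%:R : rat) != 0 by rewrite pnatr_eq0; lia.
rewrite !normr_nat.
clear E1 E2; case: n n1 => [//|n'] _.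
rewrite !exprS mulrA divfK //.
apply: ler_wpM2l; first exact: ler0n.
apply: lerXn2r; rewrite ?qualifE //= ?ler0n // ler_nat; lia.
Qed.
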